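(* Let $X=\{0,1\}$ and $c\geq1$. Let $\widetilde K_{1,00}(c)$ be the set of all $w\in X^c$ such that the sequence $(1,00,w)$ is not a code, and let $J_{1,00}(c)$ be the set of all words $w\in X^c$ of the form $w=1^{i_1}(00)^{j_1}1^{i_2}(00)^{j_2}\cdots1^{i_k}(00)^{j_k}$ for some $k\geq1$ and integers $i_l,j_l\geq0$. Then $\widetilde K_{1,00}(c)=J_{1,00}(c)\cup\{0^c\}$, and $$|\widetilde K_{1,00}(c)|=F_{c+1}+(c)_2,$$ where $F_k$ is the $k$-th Fibonacci number ($F_0=0$, $F_1=1$, $F_{k}=F_{k-1}+F_{k-2}$) and $(c)_2\in\{0,1\}$ is the remainder of $c$ modulo $2$.
   Context: For a letter or word $u$, $u^i$ denotes the concatenation of $i$ copies of $u$ ($u^0$ is the empty word). A code over $X$ is a finite sequence $C=(v_1,\ldots,v_m)$ of words over $X$ such that every $w\in X^*$ has at most one factorization into code-words: if $w=v_{i_1}\cdots v_{i_l}=v_{j_1}\cdots v_{j_{l'}}$ with $l,l'\geq1$, then $l=l'$ and $i_t=j_t$ for all $t$. *)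

(* Defs.v *)
From mathcomp Require Import all_boot.
From mathcomp Require Import boolp.
Set Implicit Arguments.
Unset Strict Implicit.
Unset Printing Implicit Defensive.

(* Alphabet X = {0,1} is encoded as bool: false = 0, true = 1.  Words = seq bool. *)

(* A factorization is a
   nonempty sequence of indices (0-based, < m). *)
Definition is_code (C : seq (seq bool)) : Prop :=
  forall s t : seq nat,
    all (fun i => i < size C) s -> all (fun i => i < size C) t ->
    s <> [::] -> t <> [::] ->
    flatten (map (nth [::] C) s) = flatten (map (nth [::] C) t) ->
    s = t.

Definition Ktilde (c : nat) : {set c.-tuple bool} :=
  [set w : c.-tuple bool | `[< ~ is_code [:: [:: true]; [:: false; false]; tval w] >] ].

(* J_{1,00}(c) : words of length c of the form 1^{i_1}(00)^{j_1}...1^{i_k}(00)^{j_k},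
   k >= 1, i_l, j_l >= 0.  The pairs (i_l, j_l) are listed in p. *)
Definition in_J (w : seq bool) : Prop :=
  exists p : seq (nat * nat), 1 <= size p /\
    w = flatten [seq nseq ij.1 true ++ flatten (nseq ij.2 [:: false; false]) | ij <- p].

Definition Jset (c : nat) : {set c.-tuple bool} :=
  [set w : c.-tuple bool | `[< in_J (tval w) >] ].

Fixpoint fib (n : nat) : nat :=
  match n with
  | 0 => 0
  | 1 => 1
  | (m.+1 as k).+1 => fib k + fib m
  end.

(* Main.v *)
Require Import Defs.
From mathcomp Require Import all_boot.
From mathcomp Require Import boolp.
From Stdlib Require Import Classical.

Definition one : seq bool := [:: true].
Definition zz : seq bool := [:: false; false].
Definition Cw (w : seq bool) := [:: one; zz; w].

Definition FF (C : seq (seq bool)) (s : seq nat) := flatten (map (nth [::] C) s).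

Definition uf (C : seq (seq bool)) : Prop :=
  forall s t, all (fun i => i < size C) s -> all (fun i => i < size C) t ->
    FF C s = FF C t -> s = t.

Lemma catI (T : Type) (a b c : seq T) : a ++ b = a ++ c -> b = c.
Proof. by elim: a => //= x a IH [] /IH. Qed.

Lemma uf_code C : uf C -> is_code C.
Proof. by move=> H s t Hs Ht _ _; apply: H. Qed.

Lemma FF_cons C i s : FF C (i :: s) = nth [::] C i ++ FF C s.
Proof. by []. Qed.

Lemma prefix_code v : uf (Cw (false :: true :: v)).
Proof.
elim=> [|i s IH] [|k t] //=.
- by case: k => [|[|[|]]].
- by case: i => [|[|[|]]].
move=> /andP[Hi Hs] /andP[Hk Ht]; rewrite !FF_cons.
case: i Hi => [|[|[|]]] // _; case: k Hk => [|[|[|]]] //= _;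
  try (by move=> [] /(IH _ Hs Ht) ->); try by [].
by move=> [] /catI /(IH _ Hs Ht) ->.
Qed.

Definition stf (j : nat) (s : seq nat) :=
  flatten (map (fun i => if i == 2 then [:: j; 2] else [:: i]) s).

Lemma stf_all j s : j < 2 -> all (fun i => i < 3) s -> all (fun i => i < 3) (stf j s).
Proof.
move=> hj; elim: s => //= i s IH /andP[hi hs].
rewrite all_cat IH // andbT; case: eqP => _ /=; last by rewrite hi.
by rewrite (ltn_trans hj).
Qed.

Lemma stf_FF j v s : j < 2 -> all (fun i => i < 3) s ->
  FF (Cw (nth [::] [:: one; zz] j ++ v)) s = FF (Cw v) (stf j s).
Proof.
move=> hj; elim: s => //= i s IH /andP[hi hs].
rewrite /stf /= -/(stf j s) /FF map_cat flatten_cat -/(FF _ s) -/(FF _ (stf j s)) -IH //.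
case: eqP => [->|ne] /=.
  by clear IH; case: j hj => [|[|]] //= _; rewrite cats0.
by case: i hi ne => [|[|[|]]] //= _ _; rewrite cats0.
Qed.

Lemma stf_head j t : j != 2 -> forall u, stf j t <> 2 :: u.
Proof.
move=> hj u; case: t => [|m t]; rewrite /stf //=; case: (m =P 2) => [_|ne] /=; first by case=> /eqP; rewrite (negbTE hj).
by case=> /ne.
Qed.

Lemma stf_inj j : j != 2 -> forall s t, stf j s = stf j t -> s = t.
Proof.
move=> hj; elim=> [|i s IH] [|k t] //=.
- by rewrite /stf /=; case: eqP.
- by rewrite /stf /=; case: eqP.
rewrite /stf /= -!/(stf j _).
case: eqP => [->|ne]; case: eqP => [->|ne'] /=.
- by case=> /IH ->.
- by case=> _ /esym H; case: (stf_head _ _ hj _ H).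
- by case=> _ H; case: (stf_head _ _ hj _ H).
- by case=> -> /IH ->.
Qed.

Lemma strip j v : j < 2 -> uf (Cw v) -> uf (Cw (nth [::] [:: one; zz] j ++ v)).
Proof.
move=> hj H s t hs ht E.
have hj2 : j != 2 by apply/negP => /eqP Ej; rewrite Ej in hj.
apply: (stf_inj j hj2); apply: H; try exact: stf_all.
by rewrite -!stf_FF.
Qed.

Lemma FF_rev C s : rev (FF C s) = FF (map rev C) (rev s).
Proof.
rewrite /FF rev_flatten -!map_rev -map_comp; congr flatten; apply: eq_map => i /=.
by elim: C i => [|x C IH] [|i] //=.
Qed.

Lemma uf_rev C : uf (map rev C) -> uf C.
Proof.
move=> H s t hs ht E.
have := H (rev s) (rev t); rewrite size_map !all_rev -!FF_rev E => /(_ hs ht erefl) E'.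
by rewrite -(revK s) E' revK.
Qed.

Fixpoint isJ (w : seq bool) : bool :=
  match w with
  | [::] => true
  | true :: w' => isJ w'
  | false :: false :: w' => isJ w'
  | _ => false
  end.

Lemma isJ_nseq k : isJ (nseq k false) = ~~ odd k.
Proof.
suff : isJ (nseq k false) = ~~ odd k /\ isJ (nseq k.+1 false) = ~~ odd k.+1 by case.
elim: k => [|k [IH1 IH2]] //; split => //=.
by rewrite IH1 negbK.
Qed.

Lemma rev_case k : odd k -> uf (Cw (true :: nseq k false)).
Proof.
move=> ok; apply: uf_rev.
change (uf (Cw (rev (true :: nseq k false)))); rewrite rev_cons rev_nseq -cats1.
elim: k {-2}k (leqnn k) ok => [|n IH] [|[|k]] //= hk ok.
- exact: prefix_code.
- apply: (strip 1 (nseq k false ++ [:: true]) erefl).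
  by apply: IH; [exact: ltnW hk | rewrite negbK in ok].
Qed.

Lemma no_true (w : seq bool) : true \notin w -> w = nseq (size w) false.
Proof. by elim: w => [|[] w IH] //=; rewrite inE /= => /IH <-. Qed.

Lemma main_code w : true \in w -> ~~ isJ w -> uf (Cw w).
Proof.
have [n] := ubnP (size w); elim: n w => [|n IH] w //.
case: w => [|[] w] //= hs.
- rewrite inE /= => _ hJ.
  case: (boolP (true \in w)) => ht.
    exact: (strip 0 w erefl (IH _ hs ht hJ)).
  move: hJ; rewrite (no_true _ ht) isJ_nseq negbK; exact: rev_case.
- case: w hs => [|[] w] //= hs.
  + move=> _ _; exact: prefix_code.
  + rewrite !inE /= => ht hJ.
    apply: (strip 1 w erefl); apply: IH => //; exact: ltnW.
Qed.

Lemma isJ_cat a b : isJ a -> isJ b -> isJ (a ++ b).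
Proof.
have [n] := ubnP (size a); elim: n a => [|n IH] a //.
case: a => [|[] a] //= hs; first exact: IH.
case: a hs => [|[] a] //= hs ha hb; apply: IH => //; exact: ltnW.
Qed.

Definition blk (ij : nat * nat) := nseq ij.1 true ++ flatten (nseq ij.2 [:: false; false]).

Lemma in_J_isJ w : in_J w <-> isJ w.
Proof.
split.
- case=> p [_ ->]; elim: p => //= ij p IH; apply: isJ_cat => //.
  apply: isJ_cat; first by elim: ij.1.
  by elim: ij.2.
- have [n] := ubnP (size w); elim: n w => [|n IH] w //.
  case: w => [|[] w] //= hs.
  + by move=> _; exists [:: (0,0)].
  + move=> /(IH _ hs) [p [_ ->]]; by exists ((1,0) :: p).
  + case: w hs => [|[] w] //= hs /IH [|p [_ ->]]; first exact: ltnW.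
    by exists ((0,1) :: p).
Qed.

Fixpoint idx (w : seq bool) : seq nat :=
  match w with
  | true :: w' => 0 :: idx w'
  | false :: false :: w' => 1 :: idx w'
  | _ => [::]
  end.

Lemma idx_spec v w : isJ w ->
  [/\ FF (Cw v) (idx w) = w, all (fun i => i < 3) (idx w) & 2 \notin idx w].
Proof.
have [n] := ubnP (size w); elim: n w => [|n IH] w //.
case: w => [|[] w] //= hs.
- by case/(IH _ hs) => E A N; rewrite FF_cons E A inE.
- case: w hs => [|[] w] //= hs /IH [|E A N]; first exact: ltnW.
  by rewrite FF_cons E A inE.
Qed.

Lemma FF_nseq1 v c : FF (Cw v) (nseq c 1) = nseq (c + c) false.
Proof. by elim: c => //= c IH; rewrite FF_cons IH addnS. Qed.

Lemma key c (w : seq bool) : 1 <= c -> size w = c ->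
  (~ is_code (Cw w) <-> isJ w \/ w = nseq c false).
Proof.
move=> hc hw; split.
- move=> H; apply: NNPP => H2; apply: H; apply: uf_code; apply: main_code.
  + apply/negP => /negP /(no_true _) E; apply: H2; right; by rewrite E hw.
  + by apply/negP => ?; apply: H2; left.
- case=> [hJ|->] H.
  + case: (idx_spec w w hJ) => E A N.
    have := H (idx w) [:: 2] A erefl _ _.
    case: (idx w) E N => [|i s] E N.
      by move: hc; rewrite -hw -E.
    move=> /(_ ltac:(by []) ltac:(by [])); rewrite -/(FF _ _) E /= cats0 => /(_ erefl) E2.
    by rewrite E2 inE in N.
  + case: c hc {hw} H => // c _ H.
    have : [:: 2; 2] = nseq c.+1 1.
      apply: H => //; first by rewrite all_nseq.
      by rewrite -/(FF _ _) -/(FF _ (nseq _ _)) FF_nseq1 /FF /= cats0 nseqD.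
    by case.
Qed.

Fixpoint Lw (c : nat) : seq (seq bool) :=
  match c with
  | 0 => [:: [::]]
  | 1 => [:: [:: true]]
  | (m.+1 as k).+1 => map (cons true) (Lw k) ++ map (fun w => false :: false :: w) (Lw m)
  end.

Lemma Lw_prop c : [/\ size (Lw c) = fib c.+1, uniq (Lw c) &
   forall w, (w \in Lw c) = isJ w && (size w == c)].
Proof.
suff : [/\ size (Lw c) = fib c.+1, uniq (Lw c) &
   forall w, (w \in Lw c) = isJ w && (size w == c)] /\
   [/\ size (Lw c.+1) = fib c.+2, uniq (Lw c.+1) &
   forall w, (w \in Lw c.+1) = isJ w && (size w == c.+1)] by case.
elim: c => [|c [[S1 U1 M1] [S2 U2 M2]]].
  split; split => //.
    by move=> w; rewrite inE; case: w => [|[] [|[] w]] //=; rewrite ?andbF //; case: w => [|[] ?]; rewrite /= ?andbF.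
  by move=> w; rewrite inE; case: w => [|[] [|[] w]] //=; rewrite ?andbF //; case: w => [|[] ?]; rewrite /= ?andbF.
split; first by split.
have -> : Lw c.+2 = map (cons true) (Lw c.+1) ++ map (fun w => false :: false :: w) (Lw c) by [].
split.
- by rewrite size_cat !size_map S1 S2; have F : fib c.+3 = fib c.+2 + fib c.+1 by []; rewrite F.
- rewrite cat_uniq !map_inj_uniq ?U1 ?U2 ?andbT //; last by move=> ? ? [].
  + apply/hasPn => x /mapP [y _ ->]; apply/mapP => [[z _]] //.
  + by move=> ? ? [].
- move=> w; rewrite mem_cat.
  case: w => [|[] w] /=.
  + by apply/negP => /orP [] /mapP [? _].
  + rewrite (mem_map (fun x y (h : true :: x = true :: y) => ltac:(by case: h))) M2.
    case: (boolP (_ \in map _ _)) => [/mapP [? _]|_] //; by rewrite orbF.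
  + case: w => [|[] w] /=.
    * by apply/negP => /orP [] /mapP [? _].
    * by apply/negP => /orP [] /mapP [? _].
    * rewrite (mem_map (fun x y (h : false :: false :: x = false :: false :: y) => ltac:(by case: h))) M1.
      case: (boolP (_ \in map (cons true) _)) => [/mapP [? _]|_] //.
Qed.

Lemma card_tuple_set c (s : seq (seq bool)) : uniq s -> all (fun x => size x == c) s ->
  #|[set w : c.-tuple bool | tval w \in s]| = size s.
Proof.
move=> us als.
have -> : #|[set w : c.-tuple bool | tval w \in s]| = #|pmap (insub : _ -> option (c.-tuple bool)) s|.
  by apply: eq_card => w; rewrite inE mem_pmap_sub.
rewrite (card_uniqP _) ?pmap_sub_uniq // size_pmap_sub.
by rewrite (eq_in_count (a2 := predT)) ?count_predT // => x /(allP als).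
Qed.

Theorem proposition3 (c : nat) : 1 <= c ->
  Ktilde c = Jset c :|: [set nseq_tuple c false] /\
  #|Ktilde c| = fib c.+1 + c %% 2.
Proof.
move=> hc.
have E : Ktilde c = Jset c :|: [set nseq_tuple c false].
  apply/setP => w; rewrite !inE.
  have hw : size (tval w) = c by rewrite size_tuple.
  have K := key c (tval w) hc hw.
  apply/idP/idP.
  - move/asboolP/K => [hJ|he].
    + by apply/orP; left; apply/asboolP/in_J_isJ.
    + by apply/orP; right; apply/eqP/val_inj.
  - case/orP => [/asboolP/in_J_isJ hJ | /eqP Ew]; apply/asboolP/K; first by left.
    by right; rewrite Ew.
split => //.
have EJ : Jset c = [set w : c.-tuple bool | tval w \in Lw c].
  apply/setP => w; rewrite !inE; case: (Lw_prop c) => _ _ ->.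
  rewrite size_tuple eqxx andbT; apply/asboolP/idP => /in_J_isJ //.
case: (Lw_prop c) => S U M.
rewrite E setUC cardsU1 EJ card_tuple_set //; last by apply/allP => x; rewrite M => /andP [].
rewrite S inE /= M size_nseq eqxx andbT isJ_nseq negbK modn2 addnC.
by case: (odd c).
Qed.
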